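(* Let $\theta:\mathbb{A}\to\mathbb{A}^\lambda$ and $\zeta:\mathbb{B}\to\mathbb{B}^\lambda$ be primitive substitutions of the same length $\lambda$, each satisfying the standing assumptions, and let $\Sigma=\theta\vee\zeta:\mathcal{A}\to\mathcal{A}^\lambda$ be a substitution joining of them. Then $\operatorname{lcm}(h(\theta),h(\zeta))\mid h(\Sigma)$ and $$\max(c(\theta),c(\zeta))\le c(\Sigma)\le c(\theta)\cdot c(\zeta).$$
   Context: A substitution $\theta:\mathbb{A}\to\mathbb{A}^\lambda$ ($\lambda\ge2$) is primitive if some iterate $\theta^k(a)$ contains all letters for every $a$. Standing assumptions for a substitution: some letter $a_0$ with $\theta(a_0)_0=a_0$, injective on letters, infinite subshift. Height $h(\theta)=\max\{m\ge1:\gcd(m,\lambda)=1,\ m\mid\gcd\{r\ge1:u[r]=u[0]\}\}$ with $u$ the fixed point starting with $a_0$ (for $\Sigma$, use a fixed point of a suitable power); column number $c(\theta)=\min_{k\ge1,0\le j<\lambda^k}|\{\theta^k(a)_j:a\in\mathbb{A}\}|$. A substitution joining: $\mathcal{A}\subset\mathbb{A}\times\mathbb{B}$ with both coordinate projections surjective and such that $(a,b)\in\mathcal{A}$ implies $(\theta(a)_j,\zeta(b)_j)\in\mathcal{A}$ for all $0\le j<\lambda$; $\Sigma(a,b)_j=(\theta(a)_j,\zeta(b)_j)$, and $\Sigma$ is assumed primitive and to have a letter $e$ with $\Sigma(e)_0=e$. *)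

(* Defs.v *)
From HB Require Import structures.
From mathcomp Require Import all_boot all_order all_algebra.
Set Implicit Arguments. Unset Strict Implicit. Unset Printing Implicit Defensive.

(* subst_pow th k a j = th^k(a)_j, the j-th letter (0-based) of the word
   th^k(a) of length lam^k (meaningful for j < lam^k):
   th^(k+1)(a)_j = th( th^k(a)_(j / lam) )_(j mod lam). *)
Fixpoint subst_pow (T : Type) (lam : nat) (th : T -> lam.-tuple T)
    (k : nat) (a : T) (j : nat) : T :=
  match k with
  | 0 => a
  | k'.+1 => let b := subst_pow th k' a (j %/ lam) in nth b (th b) (j %% lam)
  end.

Definition primitive (T : finType) (lam : nat) (th : T -> lam.-tuple T) : Prop :=
  exists k, 0 < k /\ forall a b : T, exists2 j, j < lam ^ k & subst_pow th k a j = b.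

Definition occurs (T : finType) (lam : nat) (th : T -> lam.-tuple T) (w : seq T) : Prop :=
  exists k a i, i + size w <= lam ^ k /\
    forall t, t < size w -> subst_pow th k a (i + t) = nth a w t.

Definition in_subshift (T : finType) (lam : nat) (th : T -> lam.-tuple T)
    (x : int -> T) : Prop :=
  forall (m : int) (n : nat), occurs th [seq x (m + i%:Z)%R | i <- iota 0 n].

Definition infinite_subshift (T : finType) (lam : nat) (th : T -> lam.-tuple T) : Prop :=
  ~ (exists s : seq (int -> T), forall x, in_subshift th x ->
       exists2 i, i < size s & x =1 nth x s i).

(* the fixed point u starting with a0 (assuming th(a0)_0 = a0):
   u[r] = th^k(a0)_r for any k with r < lam^k; we take k = r+1. *)
Definition fixpt (T : Type) (lam : nat) (th : T -> lam.-tuple T) (a0 : T) (r : nat) : T :=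
  subst_pow th r.+1 a0 r.

(* m divides gcd{ r >= 1 : u[r] = u[0] }  iff  m divides every such r *)
Definition divides_returns (T : eqType) (lam : nat) (th : T -> lam.-tuple T)
    (a0 : T) (m : nat) : Prop :=
  forall r, 0 < r -> fixpt th a0 r = fixpt th a0 0 -> m %| r.

Definition height_of (T : eqType) (lam : nat) (th : T -> lam.-tuple T)
    (a0 : T) (h : nat) : Prop :=
  [/\ 0 < h, coprime h lam, divides_returns th a0 h &
      forall m, 0 < m -> coprime m lam -> divides_returns th a0 m -> m <= h].

Definition column (T : finType) (lam : nat) (th : T -> lam.-tuple T) (k j : nat) : {set T} :=
  [set subst_pow th k a j | a : T].

Definition colnum_of (T : finType) (lam : nat) (th : T -> lam.-tuple T) (c : nat) : Prop :=
  (exists k j, [/\ 0 < k, j < lam ^ k & #|column th k j| = c]) /\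
  (forall k j, 0 < k -> j < lam ^ k -> c <= #|column th k j|).

(* Main.v *)
Require Import Defs.
From HB Require Import structures.
From mathcomp Require Import all_boot all_order all_algebra.
Set Implicit Arguments. Unset Strict Implicit. Unset Printing Implicit Defensive.

Lemma ltn_mix (lam m n i j : nat) : j < lam ^ m -> i < lam ^ n -> lam ^ m * i + j < lam ^ (m + n).
Proof.
move=> hj hi; rewrite expnD.
have h1 : lam ^ m * i + j < lam ^ m * i.+1 by rewrite mulnS addnC ltn_add2r.
apply: (leq_trans h1); apply: leq_mul => //.
Qed.

Lemma sp_add (T : Type) lam (th : T -> lam.-tuple T) m n a i j :
  0 < lam -> j < lam ^ m ->
  subst_pow th (m + n) a (lam ^ m * i + j) = subst_pow th m (subst_pow th n a i) j.
Proof.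
move=> lam0; elim: m j => [|m IH] j hj.
- rewrite expn0 in hj; have -> : j = 0 by case: j hj.
  by rewrite expn0 mul1n addn0.
- rewrite addSn /= expnSr -mulnA (mulnC lam) mulnA divnMDl // modnMDl IH //.
  by rewrite ltn_divLR // -expnSr.
Qed.

Lemma sp_zero (T : Type) lam (th : T -> lam.-tuple T) n a :
  nth a (th a) 0 = a -> subst_pow th n a 0 = a.
Proof. by move=> h; elim: n => [|n IH] //=; rewrite div0n mod0n IH. Qed.

Lemma sp_ext (T : Type) lam (th : T -> lam.-tuple T) N k a P :
  0 < lam -> nth a (th a) 0 = a -> P < lam ^ N ->
  subst_pow th (N + k) a P = subst_pow th N a P.
Proof.
move=> l0 ha hP; have := @sp_add T lam th N k a 0 P l0 hP.
by rewrite muln0 add0n sp_zero.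
Qed.

Lemma ltn_self_exp lam P : 1 < lam -> P < lam ^ P.+1.
Proof.
move=> l1; apply: (leq_trans (ltn_expl P l1)).
by apply: leq_pexp2l => //; apply: ltnW.
Qed.

Lemma fix_sp (T : Type) lam (th : T -> lam.-tuple T) a0 N P :
  1 < lam -> nth a0 (th a0) 0 = a0 -> P < lam ^ N -> fixpt th a0 P = subst_pow th N a0 P.
Proof.
move=> l1 h hP; have l0 : 0 < lam by apply: ltnW.
rewrite /fixpt -(@sp_ext T lam th P.+1 N a0 P l0 h (ltn_self_exp P l1)) addnC.
by rewrite sp_ext.
Qed.

Lemma fix_blow (T : Type) lam (th : T -> lam.-tuple T) a0 m P j :
  1 < lam -> nth a0 (th a0) 0 = a0 -> j < lam ^ m ->
  fixpt th a0 (lam ^ m * P + j) = subst_pow th m (fixpt th a0 P) j.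
Proof.
move=> l1 h hj; have l0 : 0 < lam by apply: ltnW.
rewrite (fix_sp (N := m + P.+1)) //; last by apply: ltn_mix => //; apply: ltn_self_exp.
by rewrite sp_add // /fixpt.
Qed.

Lemma height_transfer (T : finType) lam (th : T -> lam.-tuple T) a0 a h r :
  1 < lam -> primitive th -> nth a0 (th a0) 0 = a0 -> nth a (th a) 0 = a ->
  coprime h lam -> divides_returns th a0 h -> fixpt th a r = fixpt th a 0 -> h %| r.
Proof.
move=> l1 [k [k0 Hk]] h0 ha cop dr E.
have l0 : 0 < lam by apply: ltnW.
case: (Hk a0 a) => q hq Hq.
case: (Hk a a0) => j' hj Hj.
have f00 : fixpt th a0 0 = a0 by rewrite /fixpt sp_zero.
have u0 : forall Q, fixpt th a0 Q = a0 -> h %| Q.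
  move=> [|Q] HQ //; apply: dr => //; by rewrite HQ f00.
have uq : fixpt th a0 q = a by rewrite (fix_sp (N := k)).
have ar : subst_pow th r.+1 a r = a.
  by move: E; rewrite /fixpt => ->; rewrite sp_zero.
have u1 : fixpt th a0 (lam ^ r.+1 * q + 0) = a.
  by rewrite fix_blow // ?uq ?sp_zero // expn_gt0 l0.
have u2 : fixpt th a0 (lam ^ r.+1 * q + r) = a.
  by rewrite fix_blow // ?uq // ltn_self_exp.
have v1 : fixpt th a0 (lam ^ k * (lam ^ r.+1 * q + 0) + j') = a0 by rewrite fix_blow // u1.
have v2 : fixpt th a0 (lam ^ k * (lam ^ r.+1 * q + r) + j') = a0 by rewrite fix_blow // u2.
have d1 := u0 _ v1; have d2 := u0 _ v2.
have e2 : lam ^ k * (lam ^ r.+1 * q + r) + j' = (lam ^ k * (lam ^ r.+1 * q + 0) + j') + lam ^ k * r.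
  by rewrite addn0 mulnDr addnAC.
rewrite e2 (dvdn_addr _ d1) in d2.
by rewrite Gauss_dvdr // in d2; apply: coprimeXr.
Qed.

Theorem mainTheorem15 (lam : nat) (A B : finType)
  (th : A -> lam.-tuple A) (ze : B -> lam.-tuple B)
  (S : {set A * B})
  (Si : {x : A * B | x \in S} -> lam.-tuple {x : A * B | x \in S})
  (a0 : A) (b0 : B) (e : {x : A * B | x \in S}) :
  2 <= lam ->
  (* standing assumptions and primitivity for theta *)
  primitive th -> nth a0 (th a0) 0 = a0 -> injective th -> infinite_subshift th ->
  (* standing assumptions and primitivity for zeta *)
  primitive ze -> nth b0 (ze b0) 0 = b0 -> injective ze -> infinite_subshift ze ->
  (* S is a substitution joining *)
  (forall a : A, exists b : B, (a, b) \in S) ->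
  (forall b : B, exists a : A, (a, b) \in S) ->
  (forall x, x \in S -> forall j : 'I_lam, (tnth (th x.1) j, tnth (ze x.2) j) \in S) ->
  (* Si is the joined substitution Sigma(a,b)_j = (theta(a)_j, zeta(b)_j) *)
  (forall (x : {x : A * B | x \in S}) (j : 'I_lam),
      val (tnth (Si x) j) = (tnth (th (val x).1) j, tnth (ze (val x).2) j)) ->
  primitive Si -> nth e (Si e) 0 = e ->
  (forall hth hze hSi, height_of th a0 hth -> height_of ze b0 hze ->
      height_of Si e hSi -> lcmn hth hze %| hSi) /\
  (forall cth cze cSi, colnum_of th cth -> colnum_of ze cze -> colnum_of Si cSi ->
      maxn cth cze <= cSi <= cth * cze).
Proof.
move=> l1 pth th0 _ _ pze ze0 _ _ surjA surjB _ hSi pSi e0.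
have l0 : 0 < lam by apply: ltnW.
have proj : forall n x j, val (subst_pow Si n x j) =
    (subst_pow th n (val x).1 j, subst_pow ze n (val x).2 j).
  elim => [|n IH] x j /=; first by case: (val x).
  have o := Ordinal (ltn_pmod j l0).
  have tn : forall (X : Type) (t : lam.-tuple X) d, nth d t (j %% lam) = tnth t (Ordinal (ltn_pmod j l0)).
    by move=> X t d; rewrite (tnth_nth d).
  by rewrite !tn hSi IH.
have E := proj 1 e 0; rewrite /= ?div0n ?mod0n e0 in E.
have tha : nth (val e).1 (th (val e).1) 0 = (val e).1 by symmetry; exact: (congr1 fst E).
have zeb : nth (val e).2 (ze (val e).2) 0 = (val e).2 by symmetry; exact: (congr1 snd E).
split.
- move=> hth hze hS [hth0 cth dth _] [hze0 cze dze _] [hS0 cS dS mS].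
  have L : forall r, 0 < r -> fixpt Si e r = fixpt Si e 0 -> lcmn hth hze %| r.
    move=> r r0 Er; have := congr1 val Er; rewrite /fixpt !proj; case=> E1 E2.
    rewrite dvdn_lcm; apply/andP; split.
    + by apply: (height_transfer l1 pth th0 tha cth dth).
    + by apply: (height_transfer l1 pze ze0 zeb cze dze).
  have cl : coprime (lcmn hth hze) lam.
    apply: (coprime_dvdl (n := hth * hze)).
      by rewrite dvdn_lcm dvdn_mulr // dvdn_mull.
    by rewrite coprimeMl cth cze.
  have le : lcmn hS (lcmn hth hze) <= hS.
    apply: mS.
    + by rewrite !lcmn_gt0 hS0 hth0 hze0.
    + apply: (coprime_dvdl (n := hS * lcmn hth hze)).
        by rewrite dvdn_lcm dvdn_mulr // dvdn_mull.
      by rewrite coprimeMl cS cl.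
    + by move=> r r0 Er; rewrite dvdn_lcm dS // L.
  have eq : lcmn hS (lcmn hth hze) = hS.
    apply/eqP; rewrite eqn_leq le /=; apply: dvdn_leq.
      by rewrite !lcmn_gt0 hS0 hth0 hze0.
    exact: dvdn_lcml.
  by rewrite -eq dvdn_lcmr.
- move=> cth cze cS [[k1 [j1 [k1p j1l E1]]] Hth] [[k2 [j2 [k2p j2l E2]]] Hze]
    [[k [j [kp jl ES]]] HS].
  apply/andP; split.
  + rewrite geq_max; apply/andP; split.
    * apply: (leq_trans (Hth k j kp jl)); rewrite -ES.
      apply: (leq_trans _ (leq_imset_card (fun x : {x : A * B | x \in S} => (val x).1) _)).
      apply: subset_leq_card; apply/subsetP => c /imsetP [a _ ->].
      case: (surjA a) => b' hab.
      apply/imsetP; exists (subst_pow Si k (exist _ (a, b') hab) j).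
        by apply: imset_f.
      by rewrite proj.
    * apply: (leq_trans (Hze k j kp jl)); rewrite -ES.
      apply: (leq_trans _ (leq_imset_card (fun x : {x : A * B | x \in S} => (val x).2) _)).
      apply: subset_leq_card; apply/subsetP => c /imsetP [b _ ->].
      case: (surjB b) => a' hab.
      apply/imsetP; exists (subst_pow Si k (exist _ (a', b) hab) j).
        by apply: imset_f.
      by rewrite proj.
  + have JK : lam ^ k1 * j2 + j1 < lam ^ (k1 + k2) by apply: ltn_mix.
    apply: (leq_trans (HS _ _ _ JK)); first by rewrite addn_gt0 k1p.
    have c1 : #|column th (k1 + k2) (lam ^ k1 * j2 + j1)| <= cth.
      rewrite -E1; apply: subset_leq_card; apply/subsetP => c /imsetP [a _ ->].
      by rewrite sp_add //; apply: imset_f.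
    have c2 : #|column ze (k1 + k2) (lam ^ k1 * j2 + j1)| <= cze.
      rewrite -E2.
      apply: (leq_trans _ (leq_imset_card (fun y => subst_pow ze k1 y j1) _)).
      apply: subset_leq_card; apply/subsetP => c /imsetP [b _ ->].
      rewrite sp_add //; apply: imset_f; by apply: imset_f.
    apply: (leq_trans _ (leq_mul c1 c2)).
    rewrite -cardsX -(card_imset _ val_inj).
    apply: subset_leq_card; apply/subsetP => p /imsetP [x /imsetP [y _ ->] ->].
    rewrite proj inE /=; apply/andP; split; by apply: imset_f.
Qed.
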